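(* Under the hypotheses and with the sequences $(\beta_k),(\lambda_k),(x_k),(y_k)$ of the accelerated scheme (any $\lambda_0>0$), set $\beta_0=0$, $\delta_k=F(y_k)-F(x^* )$ and $u_k=\beta_k x_k-(\beta_k-1)y_k-x^*$. Then for every $k\ge1$, $$\lambda_k\beta_k^2\,\delta_{k+1}-\lambda_{k-1}\beta_{k-1}^2\,\delta_k\le\tfrac12\big(\|u_k\|^2-\|u_{k+1}\|^2\big).$$
   Context: $\mathbb{R}^d$ carries the standard inner product $\langle\cdot,\cdot\rangle$ and Euclidean norm $\|\cdot\|$. $f:\mathbb{R}^d\to\mathbb{R}$ is convex and differentiable with $L$-Lipschitz gradient, $h:\mathbb{R}^d\to\mathbb{R}\cup\{+\infty\}$ is proper, closed and convex, $F=f+h$, and $x^*$ is a minimizer of $F$. For $\lambda>0$, $\mathrm{prox}_{\lambda h}(w)=\arg\min_{u}\{\lambda h(u)+\tfrac12\|u-w\|^2\}$ and $G^{f}_{\lambda h}(x)=\frac{1}{\lambda}(x-\mathrm{prox}_{\lambda h}(x-\lambda\nabla f(x)))$. The linesearch condition $\mathrm{(LS)}(x,\lambda)$ is: with $G=G^{f}_{\lambda h}(x)$, $f(x-2\lambda G)\le f(x-\lambda G)-\lambda\langle G,\nabla f(x)\rangle+\tfrac{\lambda}{2}\|G\|^2$. Accelerated scheme: $x_1=y_1\in\mathrm{dom}\,h$, $\lambda_0>0$, $\beta_1=1$, $\beta_{k+1}=\frac{1+\sqrt{1+4\beta_k^2}}{2}$, and for $k\ge1$: $\lambda_k=\max\{\lambda\in(0,\lambda_{k-1}]:\mathrm{(LS)}(x_k,\lambda)\}$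 (assumed attained), $y_{k+1}=x_k-\lambda_kG^{f}_{\lambda_kh}(x_k)$, $x_{k+1}=y_{k+1}+\frac{\beta_k-1}{\beta_{k+1}}(y_{k+1}-y_k)$. *)

(* Defs.v *)
From HB Require Import structures.
From mathcomp Require Import all_boot all_order all_algebra.
From mathcomp Require Import all_classical all_reals all_analysis.
Set Implicit Arguments. Unset Strict Implicit. Unset Printing Implicit Defensive.
Import Order.TTheory GRing.Theory Num.Theory.
Import numFieldNormedType.Exports.
Local Open Scope ring_scope.
Local Open Scope classical_set_scope.

Definition dotp {R : realType} {d : nat} (u v : 'rV[R]_d) : R :=
  \sum_(i < d) u ord0 i * v ord0 i.
Definition enorm {R : realType} {d : nat} (u : 'rV[R]_d) : R :=
  Num.sqrt (dotp u u).

Definition convex_fun {R : realType} {d : nat} (f : 'rV[R]_d -> R) : Prop :=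
  forall (x y : 'rV[R]_d) (t : R), 0 <= t <= 1 ->
    f (t *: x + (1 - t) *: y) <= t * f x + (1 - t) * f y.

(* convexity of an extended-real-valued function (never -oo when used) *)
Definition econvex_fun {R : realType} {d : nat} (h : 'rV[R]_d -> \bar R) : Prop :=
  forall (x y : 'rV[R]_d) (t : R), 0 <= t <= 1 ->
    (h (t *: x + (1 - t) *: y)%R <= t%:E * h x + (1 - t)%:E * h y)%E.

Definition proper_fun {R : realType} {d : nat} (h : 'rV[R]_d -> \bar R) : Prop :=
  (forall x, h x != -oo%E) /\ (exists x, h x \is a fin_num).

Definition closed_fun {R : realType} {d : nat} (h : 'rV[R]_d -> \bar R) : Prop :=
  closed [set p : 'rV[R]_d * R | (h p.1 <= p.2%:E)%E].

Definition is_gradient {R : realType} {d : nat} (f : 'rV[R]_d -> R)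
  (gradf : 'rV[R]_d -> 'rV[R]_d) : Prop :=
  forall x, differentiable f x /\ forall v, 'd f x v = dotp (gradf x) v.

Definition is_prox {R : realType} {d : nat} (h : 'rV[R]_d -> \bar R)
  (prox : R -> 'rV[R]_d -> 'rV[R]_d) : Prop :=
  forall (lam : R) (w u : 'rV[R]_d), 0 < lam ->
    (lam%:E * h (prox lam w) + (2^-1 * enorm (prox lam w - w)%R ^+ 2)%:E
      <= lam%:E * h u + (2^-1 * enorm (u - w)%R ^+ 2)%:E)%E.

Definition Gmap {R : realType} {d : nat} (gradf : 'rV[R]_d -> 'rV[R]_d)
  (prox : R -> 'rV[R]_d -> 'rV[R]_d) (lam : R) (x : 'rV[R]_d) : 'rV[R]_d :=
  lam^-1 *: (x - prox lam (x - lam *: gradf x)).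

Definition LS {R : realType} {d : nat} (f : 'rV[R]_d -> R)
  (gradf : 'rV[R]_d -> 'rV[R]_d) (prox : R -> 'rV[R]_d -> 'rV[R]_d)
  (x : 'rV[R]_d) (lam : R) : Prop :=
  let G := Gmap gradf prox lam x in
  f (x - (2 * lam) *: G) <= f (x - lam *: G) - lam * dotp G (gradf x)
                             + lam / 2 * enorm G ^+ 2.

(* Main.v *)
Require Import Defs.
From HB Require Import structures.
From mathcomp Require Import all_boot all_order all_algebra.
From mathcomp Require Import all_classical all_reals all_analysis.
From mathcomp Require Import ring lra.
Import Order.TTheory GRing.Theory Num.Theory.
Import numFieldNormedType.Exports.
Local Open Scope ring_scope.
Local Open Scope classical_set_scope.

Section Dot.
Variables (R : realType) (d : nat).
Implicit Types (u v w : 'rV[R]_d) (a : R).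
Lemma dotpC u v : dotp u v = dotp v u.
Proof. by rewrite /dotp; apply: eq_bigr => i _; rewrite mulrC. Qed.
Lemma dotpDr u v w : dotp u (v + w) = dotp u v + dotp u w.
Proof. by rewrite /dotp -big_split; apply: eq_bigr => i _; rewrite mxE mulrDr. Qed.
Lemma dotpZr u a v : dotp u (a *: v) = a * dotp u v.
Proof. by rewrite /dotp mulr_sumr; apply: eq_bigr => i _; rewrite mxE; ring. Qed.
Lemma dotpNr u v : dotp u (- v) = - dotp u v.
Proof. by rewrite /dotp -sumrN; apply: eq_bigr => i _; rewrite mxE mulrN. Qed.
Lemma dotpDl u v w : dotp (v + w) u = dotp v u + dotp w u.
Proof. by rewrite dotpC dotpDr !(dotpC u). Qed.
Lemma dotpZl u a v : dotp (a *: v) u = a * dotp v u.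
Proof. by rewrite dotpC dotpZr dotpC. Qed.
Lemma dotpNl u v : dotp (- v) u = - dotp v u.
Proof. by rewrite dotpC dotpNr dotpC. Qed.
Lemma dotp_ge0 u : 0 <= dotp u u.
Proof. by apply: sumr_ge0 => i _; rewrite -expr2 sqr_ge0. Qed.
Lemma enorm2 u : enorm u ^+ 2 = dotp u u.
Proof. by rewrite /enorm sqr_sqrtr // dotp_ge0. Qed.
End Dot.

Definition dotpE := (dotpDr, dotpDl, dotpZr, dotpZl, dotpNr, dotpNl).

Lemma small_lin (R : realType) (A B : R) : 0 <= B ->
  (forall t, 0 < t -> t <= 1 -> 0 <= t * A + t ^+ 2 * B) -> 0 <= A.
Proof.
move=> B0 H; rewrite leNgt; apply/negP => A0.
have D0 : 0 < 2 * B - A by lra.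
pose t := - A / (2 * B - A).
have t0 : 0 < t by rewrite /t divr_gt0 //; lra.
have t1 : t <= 1 by rewrite /t ler_pdivrMr //; lra.
have key : (A + t * B) * (2 * B - A) = A * (B - A).
  by rewrite /t; field; rewrite gt_eqF.
have : A + t * B < 0.
  have : (A + t * B) * (2 * B - A) < 0 by rewrite key; nra.
  by rewrite pmulr_llt0.
have := H t t0 t1; nra.
Qed.

Lemma prox_opt (R : realType) (d : nat) (h : 'rV[R]_d -> \bar R) prox lam w z :
  proper_fun h -> econvex_fun h -> is_prox h prox -> 0 < lam ->
  h (prox lam w) \is a fin_num -> h z \is a fin_num ->
  0 <= lam * (fine (h z) - fine (h (prox lam w))) + dotp (prox lam w - w) (z - prox lam w).
Proof.
move=> [hN _] hc hp lam0; set p := prox lam w => fp fz.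
apply: ((@small_lin _ _ (2^-1 * dotp (z - p) (z - p)))).
  by rewrite mulr_ge0 ?dotp_ge0.
move=> t t0 t1.
set u := t *: z + (1 - t) *: p.
have Hc := hc z p t; rewrite ltW //= t1 /= in Hc; have {}Hc := Hc isT.
rewrite -/u -(fineK fz) -(fineK fp) -!EFinM -EFinD in Hc.
have fu : h u \is a fin_num.
  by move: Hc (hN u); case: (h u).
rewrite -(fineK fu) lee_fin in Hc.
have Hp := hp lam w u lam0.
rewrite -/p -(fineK fp) -(fineK fu) -!EFinM -!EFinD lee_fin !enorm2 in Hp.
have E : u - w = (p - w) + t *: (z - p).
  by apply/rowP => i; rewrite !mxE; ring.
rewrite E in Hp.
move: Hp Hc; rewrite !dotpE.
set a1 := dotp (p - w) (p - w); set a2 := dotp (p - w) (z - p).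
set a3 := dotp (z - p) (z - p).
idtac.
move=> Hp Hc.
rewrite [dotp w p]dotpC [dotp z p]dotpC [dotp w z]dotpC in Hp *.
have := ler_wpM2l (ltW lam0) Hc. lra.
Qed.
Lemma grad_ineq (R : realType) (d : nat) (f : 'rV[R]_d -> R) gradf x z :
  convex_fun f -> is_gradient f gradf ->
  f x + dotp (gradf x) (z - x) <= f z.
Proof.
move=> cf /(_ x) [dfx dfE].
rewrite -dfE -deriveE //.
set g := (fun h : R => h^-1 *: ((f \o shift x) (h *: (z - x)) - f x)).
have cvfx : cvg (g @ 0^') by exact: diff_derivable.
have Hr : g @ 0^'+ --> lim (g @ 0^').
  move=> A /cvfx /nbhs_ballP [_ /posnumP[e] xe_A].
  by exists e%:num => //= y xe_y /gt_eqF/negbT/xe_A; exact.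
rewrite -lerBrDl.
apply: (cvgr_to_le Hr).
near=> t.
have t0 : 0 < t by near: t; exact: nbhs_right_gt.
have t1 : t <= 1 by near: t; exists 1 => //= s; rewrite /ball /= sub0r normrN => /ltW + s0; rewrite ger0_norm // ltW.
rewrite /g /= .
have := cf z x t. idtac.
have E : t *: z + (1 - t) *: x = t *: (z - x) + x.
  by apply/rowP => i; rewrite !mxE; ring.
rewrite E t1 ltW //= => /(_ isT) H.
rewrite -[_ *: _]/(t^-1 * _) -(ler_pM2l t0) mulrA mulfV ?gt_eqF // mul1r; lra.
Unshelve. all: by end_near.
Qed.

Lemma descent (R : realType) (d : nat) (f : 'rV[R]_d -> R) gradf
  (h : 'rV[R]_d -> \bar R) prox xk lam z :
  convex_fun f -> is_gradient f gradf -> proper_fun h -> econvex_fun h ->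
  is_prox h prox -> 0 < lam -> LS f gradf prox xk lam ->
  h (xk - lam *: Gmap gradf prox lam xk) \is a fin_num -> h z \is a fin_num ->
  f (xk - lam *: Gmap gradf prox lam xk) + fine (h (xk - lam *: Gmap gradf prox lam xk))
  <= f z + fine (h z) + dotp (Gmap gradf prox lam xk) (xk - z)
     - lam / 2 * dotp (Gmap gradf prox lam xk) (Gmap gradf prox lam xk).
Proof.
move=> cf gf hpr hc hp lam0 ls.
rewrite /LS /= in ls.
set G := Gmap gradf prox lam xk in ls *.
set w := xk - lam *: gradf xk.
set g := gradf xk in ls w *.
have pe : xk - lam *: G = prox lam w.
  by apply/rowP => i; rewrite /G /Gmap !mxE; field; rewrite gt_eqF.
move=> fp fz.
have Hpo := @prox_opt R d h prox lam w z hpr hc hp lam0.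
rewrite -pe in Hpo; have {}Hpo := Hpo fp fz.
have E1 : xk - lam *: G - w = lam *: (g - G).
  by apply/rowP => i; rewrite !mxE; ring.
rewrite E1 dotpZl -mulrDr pmulr_rge0 // in Hpo.
have Hg := @grad_ineq R d f gradf xk z cf gf; rewrite -/g in Hg.
clearbody G w g.
have Hm := cf xk (xk - (2 * lam) *: G) 2^-1.
have E2 : 2^-1 *: xk + (1 - 2^-1) *: (xk - (2 * lam) *: G) = xk - lam *: G.
  by apply/rowP => i; rewrite !mxE; field.
rewrite E2 in Hm.
have {}Hm : f (xk - lam *: G) <= 2^-1 * f xk + (1 - 2^-1) * f (xk - (2 * lam) *: G).
  by apply: Hm; lra.
rewrite enorm2 in ls.
move: Hpo Hm Hg ls; rewrite !dotpE.
rewrite [dotp G g]dotpC => Hpo Hm Hg ls.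
lra.
Qed.

Lemma prox_fin (R : realType) (d : nat) (h : 'rV[R]_d -> \bar R) prox lam w x1 :
  proper_fun h -> is_prox h prox -> 0 < lam -> h x1 \is a fin_num ->
  h (prox lam w) \is a fin_num.
Proof.
move=> [hN _] hp lam0 f1.
have := hp lam w x1 lam0; rewrite -(fineK f1) -EFinM -EFinD.
move: (hN (prox lam w)); case: (h (prox lam w)) => // _.
by rewrite gt0_muley ?lte_fin.
Qed.

Lemma Gmap_prox (R : realType) (d : nat) (gradf : 'rV[R]_d -> 'rV[R]_d) prox lam xk :
  0 < lam -> xk - lam *: Gmap gradf prox lam xk = prox lam (xk - lam *: gradf xk).
Proof. by move=> lam0; apply/rowP => i; rewrite /Gmap !mxE; field; rewrite gt_eqF. Qed.

Lemma beta_facts (R : realType) (beta : nat -> R) k :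
  beta 0%N = 0 -> beta 1%N = 1 ->
  (forall k, (1 <= k)%N -> beta k.+1 = (1 + Num.sqrt (1 + 4 * beta k ^+ 2)) / 2) ->
  (1 <= k)%N -> 1 <= beta k /\ beta k ^+ 2 - beta k = beta k.-1 ^+ 2.
Proof.
move=> b0 b1 bS; case: k => // [] [|m] _.
  by rewrite b1 b0; split => //; rewrite expr1n expr0n subrr.
rewrite bS //= .
have s0 := sqrtr_ge0 (1 + 4 * beta m.+1 ^+ 2).
have s2 : Num.sqrt (1 + 4 * beta m.+1 ^+ 2) ^+ 2 = 1 + 4 * beta m.+1 ^+ 2.
  by rewrite sqr_sqrtr // addr_ge0 // mulr_ge0 // sqr_ge0.
split; first nra.
move: s0 s2; set s := Num.sqrt _ => s0 s2.
transitivity ((s ^+ 2 - 1) / 4); first by field.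
by rewrite s2; field.
Qed.

Theorem mainTheorem9 (R : realType) (d : nat)
  (f : 'rV[R]_d -> R) (gradf : 'rV[R]_d -> 'rV[R]_d) (L : R)
  (h : 'rV[R]_d -> \bar R) (prox : R -> 'rV[R]_d -> 'rV[R]_d)
  (xstar : 'rV[R]_d)
  (beta lambda : nat -> R) (x y : nat -> 'rV[R]_d) :
  convex_fun f ->
  is_gradient f gradf ->
  (forall u v, enorm (gradf u - gradf v) <= L * enorm (u - v)) ->
  proper_fun h -> closed_fun h -> econvex_fun h ->
  is_prox h prox ->
  (forall z, ((f xstar)%:E + h xstar <= (f z)%:E + h z)%E) ->
  x 1%N = y 1%N -> h (x 1%N) \is a fin_num ->
  0 < lambda 0%N ->
  beta 0%N = 0 -> beta 1%N = 1 ->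
  (forall k, (1 <= k)%N ->
     beta k.+1 = (1 + Num.sqrt (1 + 4 * beta k ^+ 2)) / 2) ->
  (forall k, (1 <= k)%N ->
     [/\ 0 < lambda k, lambda k <= lambda k.-1,
         LS f gradf prox (x k) (lambda k) &
         forall lam, 0 < lam -> lam <= lambda k.-1 ->
           LS f gradf prox (x k) lam -> lam <= lambda k]) ->
  (forall k, (1 <= k)%N ->
     y k.+1 = x k - lambda k *: Gmap gradf prox (lambda k) (x k)) ->
  (forall k, (1 <= k)%N ->
     x k.+1 = y k.+1 + ((beta k - 1) / beta k.+1) *: (y k.+1 - y k)) ->
  let delta k := ((f (y k))%:E + h (y k) - ((f xstar)%:E + h xstar))%E in
  let u k := beta k *: x k - (beta k - 1) *: y k - xstar in
  forall k, (1 <= k)%N ->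
    ((lambda k * beta k ^+ 2)%:E * delta k.+1
       - (lambda k.-1 * beta k.-1 ^+ 2)%:E * delta k
     <= (2^-1 * (enorm (u k) ^+ 2 - enorm (u k.+1) ^+ 2))%:E)%E.
Proof.
move=> cf gf _ hpr _ hc hp xopt x1y1 fx1 l00 b0 b1 bS hl ye xe delta u k k1.
have fy : forall j, (1 <= j)%N -> h (y j) \is a fin_num.
  case=> // [] [|j] _; first by rewrite -x1y1.
  have [l0 _ _ _] := hl j.+1 isT.
  by rewrite ye // Gmap_prox //; apply: (@prox_fin R d h prox _ _ _ hpr hp l0 fx1).
have fxs : h xstar \is a fin_num.
  have := xopt (x 1%N); rewrite -(fineK fx1) -EFinD.
  by case: hpr => hN _; move: (hN xstar); case: (h xstar).
have [lk0 lkle ls _] := hl k k1.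
have [bk1 bkE] := @beta_facts R beta k b0 b1 bS k1.
have bk10 : 0 < beta k.+1.
  rewrite bS // divr_gt0 // ltr_pwDl // sqrtr_ge0.
set G := Gmap gradf prox (lambda k) (x k).
have fyk1 : h (x k - lambda k *: G) \is a fin_num.
  by rewrite -ye // fy.
have D1 := @descent R d f gradf h prox _ _ (y k) cf gf hpr hc hp lk0 ls fyk1 (fy k k1).
have D2 := @descent R d f gradf h prox _ _ xstar cf gf hpr hc hp lk0 ls fyk1 fxs.
rewrite -/G in D1 D2.
have dk0 := xopt (y k).
have yk1 : y k.+1 = x k - lambda k *: G by rewrite ye.
clearbody G.
have ue : u k.+1 = u k - (lambda k * beta k) *: G.
  rewrite /u xe // yk1; apply/rowP => i; rewrite !mxE; field.
  by rewrite gt_eqF.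
rewrite -yk1 in fyk1 D1 D2.
rewrite /delta /= -(fineK fyk1) -(fineK (fy k k1)) -(fineK fxs).
rewrite -(fineK (fy k k1)) -(fineK fxs) -!EFinD lee_fin in dk0.
rewrite -!EFinD lee_fin.
have hGU : dotp G (u k) = beta k * dotp G (x k) - (beta k - 1) * dotp G (y k) - dotp G xstar.
  by rewrite /u /= !dotpE; ring.
move: hGU; set U := u k in ue *; clearbody U => hGU.
rewrite !enorm2 ue !dotpE [dotp U G]dotpC hGU.
move: D1 D2; rewrite !dotpE => D1 D2.
set P := f (y k.+1) + fine (h (y k.+1)) in D1 D2 *.
set Q := f (y k) + fine (h (y k)) in D1 D2 dk0 *.
set S := f xstar + fine (h xstar) in D2 dk0 *.
have comb : beta k * (P - S) <= (beta k - 1) * (Q - S) + (beta k * dotp G (x k) - (beta k - 1) * dotp G (y k) - dotp G xstar) - beta k * lambda k / 2 * dotp G G.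
  have bm1 : 0 <= beta k - 1 by lra.
  have := ler_wpM2l bm1 D1. lra.
have H2 := ler_wpM2l (mulr_ge0 (ltW lk0) (le_trans ler01 bk1)) comb.
have QS : 0 <= Q - S by rewrite subr_ge0.
have H3 := ler_wpM2r (mulr_ge0 (sqr_ge0 (beta k.-1)) QS) lkle.
have E3 : lambda k * beta k * ((beta k - 1) * (Q - S)) = lambda k * beta k.-1 ^+ 2 * (Q - S).
  by rewrite -bkE; ring.
lra.
Qed.
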